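(* Let $A\in\mathbb{R}^{n\times n}$, $C\in\mathbb{R}^{p\times n}$ and $s\in\mathbb{N}$. If $(A,C)$ is not $s$-sparse detectable, then for every $v\in\mathbb{N}$ and every matrix $D\in\mathbb{R}^{v\times p}$, $(A,C)$ is not $s$-sparse detectable with respect to $D$.
   Context: A pair $(A,M)$ is detectable if every eigenvalue of $A$ of modulus $\ge1$ is observable, i.e. $Mw\ne0$ for every (complex) eigenvector $w$ of $A$ whose eigenvalue has modulus $\ge 1$. Let $\mathbf{E}_p=\{\mathbf{e}_1,\dots,\mathbf{e}_p\}$ be the standard basis of $\mathbb{R}^p$. For $D\in\mathbb{R}^{v\times p}$ and $k\in\mathbb{N}$, let $\mathbf{P}_k(D)$ be the set of all real matrices $L$ with $v$ columns (any number of rows) such that $\ker(L)=D(\mathrm{span}\,V)$ for some $V\subseteq\mathbf{E}_p$ with $|V|\le k$. $(A,C)$ is $k$-sparse detectable with respect to $D$ if $(A,LDC)$ is detectable for every $L\in\mathbf{P}_k(D)$; $(A,C)$ is $k$-sparse detectable if it is $k$-sparse detectable with respect to $I_p$. *)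

(* Defs.v *)
From HB Require Import structures.
From mathcomp Require Import all_boot all_order all_algebra.
From mathcomp Require Import reals.
From mathcomp.real_closed Require Import complex.
Set Implicit Arguments. Unset Strict Implicit. Unset Printing Implicit Defensive.
Import Order.TTheory GRing.Theory Num.Theory.
Local Open Scope ring_scope.

Definition cmx (R : realType) (m n : nat) (M : 'M[R]_(m, n)) : 'M[complex R]_(m, n) :=
  map_mx (fun x : R => x%:C)%C M.

Definition detectable (R : realType) (n q : nat) (A : 'M[R]_n) (M : 'M[R]_(q, n)) : Prop :=
  forall (lam : complex R) (w : 'cV[complex R]_n),
    w != 0 -> cmx A *m w = lam *: w -> 1 <= `|lam| -> cmx M *m w != 0.

Definition ker_eq_img (R : realType) (q v p : nat) (L : 'M[R]_(q, v)) (D : 'M[R]_(v, p))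
    (V : {set 'I_p}) : Prop :=
  forall x : 'cV[R]_v,
    L *m x = 0 <->
    exists y : 'cV[R]_p, (forall i, i \notin V -> y i 0 = 0) /\ x = D *m y.

Definition in_Pk (R : realType) (q v p : nat) (k : nat) (D : 'M[R]_(v, p))
    (L : 'M[R]_(q, v)) : Prop :=
  exists V : {set 'I_p}, (#|V| <= k)%N /\ ker_eq_img L D V.

Definition sparse_detectable_wrt (R : realType) (n p v : nat) (k : nat)
    (A : 'M[R]_n) (C : 'M[R]_(p, n)) (D : 'M[R]_(v, p)) : Prop :=
  forall (q : nat) (L : 'M[R]_(q, v)), in_Pk k D L -> detectable A (L *m D *m C).

Definition sparse_detectable (R : realType) (n p : nat) (k : nat)
    (A : 'M[R]_n) (C : 'M[R]_(p, n)) : Prop :=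
  sparse_detectable_wrt k A C (1%:M : 'M[R]_p).

(* Main.v *)
Require Import Defs.
From HB Require Import structures.
From mathcomp Require Import all_boot all_order all_algebra.
From mathcomp Require Import reals.
From mathcomp.real_closed Require Import complex.
Set Implicit Arguments. Unset Strict Implicit. Unset Printing Implicit Defensive.
Import Order.TTheory GRing.Theory Num.Theory.
Local Open Scope ring_scope.

Lemma ReM (R: realType) q n (N : 'M[R]_(q,n)) (w : 'cV[complex R]_n) i j :
  complex.Re ((cmx N *m w) i j) = (N *m map_mx (@complex.Re R) w) i j.
Proof.
rewrite !mxE (big_morph (@complex.Re R) (id1 := 0) (op1 := +%R)) //; last first.
  by move=> [a b] [c d].
apply: eq_bigr => k _; rewrite !mxE; case: (w k j) => a b /=.
by rewrite mul0r subr0.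
Qed.

Lemma ImM (R: realType) q n (N : 'M[R]_(q,n)) (w : 'cV[complex R]_n) i j :
  complex.Im ((cmx N *m w) i j) = (N *m map_mx (@complex.Im R) w) i j.
Proof.
rewrite !mxE (big_morph (@complex.Im R) (id1 := 0) (op1 := +%R)) //; last first.
  by move=> [a b] [c d].
apply: eq_bigr => k _; rewrite !mxE; case: (w k j) => a b /=.
by rewrite mul0r addr0.
Qed.

Lemma cmx0P (R: realType) q n (N : 'M[R]_(q,n)) (w : 'cV[complex R]_n) :
  cmx N *m w = 0 <-> (N *m map_mx (@complex.Re R) w = 0 /\ N *m map_mx (@complex.Im R) w = 0).
Proof.
split.
  move=> H; split; apply/matrixP => i j.
    have h := ReM N w i j; rewrite H in h.
    rewrite [X in _ = X]mxE -h; rewrite mxE; reflexivity.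
  have h := ImM N w i j; rewrite H in h.
  rewrite [X in _ = X]mxE -h; rewrite mxE; reflexivity.
move=> [H1 H2]; apply/matrixP => i j.
have h1 : complex.Re ((cmx N *m w) i j) = 0 by rewrite ReM H1 mxE.
have h2 : complex.Im ((cmx N *m w) i j) = 0 by rewrite ImM H2 mxE.
rewrite [RHS]mxE; move: h1 h2; case: ((cmx N *m w) i j) => a b /= -> ->.
by [].
Qed.

Definition Lp (R : realType) v p (D : 'M[R]_(v, p)) (V : {set 'I_p}) : 'M[R]_(v, v) :=
  (cokermx (D *m diag_mx (\row_i ((i \in V)%:R : R)))^T)^T.

Lemma Lp_ker (R : realType) v p (D : 'M[R]_(v, p)) (V : {set 'I_p}) :
  ker_eq_img (Lp D V) D V.
Proof.
rewrite /Lp; set P := diag_mx (\row_i ((i \in V)%:R : R)).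
move=> x; split.
  move=> H.
  have : (x^T <= (D *m P)^T)%MS.
    by rewrite submxE; apply/eqP; apply: trmx_inj; rewrite trmx_mul trmxK trmx0.
  case/submxP => z hz.
  exists (P *m z^T); split.
    move=> i hi; rewrite /P mul_diag_mx !mxE (negbTE hi) mul0r //.
  by rewrite mulmxA -(trmxK (D *m P)) -trmx_mul -hz trmxK.
move=> [y [hy ->]].
have hPy : P *m y = y.
  apply/matrixP => i j; rewrite /P mul_diag_mx !mxE.
  case: (boolP (i \in V)) => hi; first by rewrite mul1r.
  by rewrite mul0r (ord1 j) hy.
apply: trmx_inj; rewrite trmx0 trmx_mul trmxK -hPy mulmxA.
apply/eqP; rewrite -submxE trmx_mul; exact: submxMl.
Qed.

Theorem lemma1 (R : realType) (n p : nat) (A : 'M[R]_n) (C : 'M[R]_(p, n)) (s : nat) :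
  ~ sparse_detectable s A C ->
  forall (v : nat) (D : 'M[R]_(v, p)), ~ sparse_detectable_wrt s A C D.
Proof.
move=> H v D HD; apply: H => q L [V [hV hker]] lam w wn0 eig hlam.
apply/negP => /eqP /cmx0P [h1 h2].
have := HD _ (Lp D V) (ex_intro _ V (conj hV (Lp_ker D V))) lam w wn0 eig hlam.
apply/negP; rewrite negbK; apply/eqP/cmx0P.
have step (x : 'cV[R]_n) : L *m 1%:M *m C *m x = 0 -> Lp D V *m D *m C *m x = 0.
  move=> hx.
  have : L *m (C *m x) = 0 by rewrite mulmxA -hx mulmx1.
  case/hker => y [hy hCy].
  rewrite -!mulmxA hCy mul1mx; apply/(Lp_ker D V); exists y; split => //.
by split; apply: step.
Qed.
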